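(* Let $(G,\preceq)$ be a left-ordered group. Let $S^+$ be the set of elements $h\succ id$ such that $h\preceq w$ for every crossing $(f,g,u,v,w)$ of the left-translation action of $G$ on $(G,\preceq)$ with $id\preceq u$; let $S^-$ be the set of elements $h\prec id$ such that $w\preceq h$ for every such crossing with $v\preceq id$; and let $S=\{id\}\cup S^+\cup S^-$. Then the Conradian soul of $(G,\preceq)$ coincides with $S$.
   Context: A left-ordering is a total order invariant under left multiplication; it is Conradian if for all $f\succ id$, $g\succ id$ there is $n\in\mathbb{N}$ with $fg^n\succ g$. A subset $C$ is convex if $f_1\prec h\prec f_2$ with $f_1,f_2\in C$ implies $h\in C$. The Conradian soul $C_\preceq(G)$ is the maximal (for inclusion) $\preceq$-convex subgroup on which the restriction of $\preceq$ is Conradian. A crossing for the left-translation action is a 5-tuple $(f,g,u,v,w)$ of elements of $G$ with: $u\prec w\prec v$; $g^nu\prec v$ and $f^nv\succ u$ for all $n\in\mathbb{N}$; and $f^Nv\prec w\prec g^Mu$ for some $M,N\in\mathbb{N}$. *)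

(* Defs.v *)
Section LO.
Variables (G : Type) (mul : G -> G -> G) (e : G) (inv : G -> G)
          (lt : G -> G -> Prop).

Definition is_group : Prop :=
  (forall a b c, mul a (mul b c) = mul (mul a b) c) /\
  (forall a, mul e a = a) /\ (forall a, mul a e = a) /\
  (forall a, mul (inv a) a = e) /\ (forall a, mul a (inv a) = e).

Definition le (a b : G) : Prop := lt a b \/ a = b.

Definition is_left_ordering : Prop :=
  (forall a, ~ lt a a) /\
  (forall a b c, lt a b -> lt b c -> lt a c) /\
  (forall a b, lt a b \/ a = b \/ lt b a) /\
  (forall a b c, lt a b -> lt (mul c a) (mul c b)).

Fixpoint pow (g : G) (n : nat) : G :=
  match n with O => e | S n => mul g (pow g n) end.

Definition is_subgroup (C : G -> Prop) : Prop :=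
  C e /\ (forall a b, C a -> C b -> C (mul a b)) /\ (forall a, C a -> C (inv a)).

Definition is_convex (C : G -> Prop) : Prop :=
  forall f1 h f2, C f1 -> C f2 -> lt f1 h -> lt h f2 -> C h.

Definition conradian_on (C : G -> Prop) : Prop :=
  forall f g, C f -> C g -> lt e f -> lt e g ->
    exists n : nat, lt g (mul f (pow g n)).

Definition convex_conradian (C : G -> Prop) : Prop :=
  is_subgroup C /\ is_convex C /\ conradian_on C.

Definition is_conradian_soul (C : G -> Prop) : Prop :=
  convex_conradian C /\
  forall D, convex_conradian D -> (forall x, C x -> D x) -> forall x, D x -> C x.

Definition crossing (f g u v w : G) : Prop :=
  lt u w /\ lt w v /\
  (forall n : nat, lt (mul (pow g n) u) v) /\
  (forall n : nat, lt u (mul (pow f n) v)) /\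
  (exists M N : nat, lt (mul (pow f N) v) w /\ lt w (mul (pow g M) u)).

Definition S_plus (h : G) : Prop :=
  lt e h /\ forall f g u v w, crossing f g u v w -> le e u -> le h w.

Definition S_minus (h : G) : Prop :=
  lt h e /\ forall f g u v w, crossing f g u v w -> le v e -> le w h.

Definition S_set (h : G) : Prop := h = e \/ S_plus h \/ S_minus h.

End LO.

(* Main.v *)
Require Import Defs.
From Stdlib Require Import Classical Arith Lia.

Section P.
Variables (G : Type) (mul : G -> G -> G) (e : G) (inv : G -> G) (lt : G -> G -> Prop).
Hypothesis HG : is_group G mul e inv.
Hypothesis Hord : is_left_ordering G mul lt.

Local Notation le := (le G lt).
Local Notation pow := (pow G mul e).

Lemma assoc a b c : mul a (mul b c) = mul (mul a b) c.
Proof. destruct HG as [H _]; apply H. Qed.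
Lemma idl a : mul e a = a. Proof. destruct HG as [_ [H _]]; apply H. Qed.
Lemma idr a : mul a e = a. Proof. destruct HG as [_ [_ [H _]]]; apply H. Qed.
Lemma invl a : mul (inv a) a = e. Proof. destruct HG as [_ [_ [_ [H _]]]]; apply H. Qed.
Lemma invr a : mul a (inv a) = e. Proof. destruct HG as [_ [_ [_ [_ H]]]]; apply H. Qed.

Lemma lt_irr a : ~ lt a a. Proof. destruct Hord as [H _]; apply H. Qed.
Lemma lt_trans a b c : lt a b -> lt b c -> lt a c.
Proof. destruct Hord as [_ [H _]]; apply H. Qed.
Lemma total a b : lt a b \/ a = b \/ lt b a.
Proof. destruct Hord as [_ [_ [H _]]]; apply H. Qed.
Lemma lmul a b c : lt a b -> lt (mul c a) (mul c b).
Proof. destruct Hord as [_ [_ [_ H]]]; apply H. Qed.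

Lemma canc1 a b : mul (inv a) (mul a b) = b.
Proof. rewrite assoc, invl, idl; reflexivity. Qed.
Lemma canc2 a b : mul a (mul (inv a) b) = b.
Proof. rewrite assoc, invr, idl; reflexivity. Qed.

Lemma lmul_inv a b c : lt (mul c a) (mul c b) -> lt a b.
Proof. intro H. apply (lmul _ _ (inv c)) in H. rewrite !canc1 in H; exact H. Qed.

Lemma inv_unique a b : mul a b = e -> b = inv a.
Proof. intro H. rewrite <- (canc1 a b), H, idr; reflexivity. Qed.
Lemma inv_inv a : inv (inv a) = a.
Proof. symmetry. apply inv_unique. apply invl. Qed.
Lemma inv_mul a b : inv (mul a b) = mul (inv b) (inv a).
Proof. symmetry. apply inv_unique. rewrite <- assoc, canc2, invr; reflexivity. Qed.

Lemma le_refl a : le a a. Proof. right; reflexivity. Qed.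
Lemma le_trans a b c : le a b -> le b c -> le a c.
Proof.
  intros [H1|H1] [H2|H2]; subst; try (right; reflexivity); left; eauto using lt_trans.
Qed.
Lemma lt_le_trans a b c : lt a b -> le b c -> lt a c.
Proof. intros H1 [H2|H2]; subst; eauto using lt_trans. Qed.
Lemma le_lt_trans a b c : le a b -> lt b c -> lt a c.
Proof. intros [H1|H1] H2; subst; eauto using lt_trans. Qed.
Lemma le_lmul a b c : le a b -> le (mul c a) (mul c b).
Proof. intros [H|H]; [left; apply lmul; exact H | right; subst; reflexivity]. Qed.
Lemma not_lt_le a b : ~ lt a b -> le b a.
Proof.
  intro H. destruct (total a b) as [H1|[H1|H1]]; [tauto| right; auto | left; auto].
Qed.
Lemma le_not_lt a b : le a b -> ~ lt b a.
Proof. intros H H'. apply (lt_irr a). eapply le_lt_trans; eauto. Qed.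
Lemma lt_not_le a b : lt a b -> ~ le b a.
Proof. intros H H'. apply (lt_irr a). eapply lt_le_trans; eauto. Qed.

Lemma pos_mul a b : lt e a -> lt e b -> lt e (mul a b).
Proof.
  intros Ha Hb. apply (lt_trans _ a); auto. rewrite <- (idr a) at 1. apply lmul; auto.
Qed.
Lemma lt_shift p q : lt p q -> lt e (mul (inv p) q).
Proof. intro H. rewrite <- (invl p). apply lmul; exact H. Qed.
Lemma lt_unshift p q : lt e (mul (inv p) q) -> lt p q.
Proof. intro H. apply (lmul _ _ p) in H. rewrite canc2, idr in H. exact H. Qed.

Lemma pow_succ_r g n : pow g (S n) = mul (pow g n) g.
Proof.
  induction n; simpl. rewrite idr, idl; reflexivity.
  simpl in IHn. rewrite <- assoc, <- IHn; reflexivity.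
Qed.
Lemma pow_add g n m : pow g (n + m) = mul (pow g n) (pow g m).
Proof. induction n; simpl. rewrite idl; reflexivity. rewrite IHn, assoc; reflexivity. Qed.
Lemma pow_mul g a n : pow (pow g a) n = pow g (a * n).
Proof.
  induction n; simpl. rewrite Nat.mul_0_r; reflexivity.
  rewrite IHn, <- pow_add. f_equal. lia.
Qed.
Lemma pow_conj x g n : pow (mul (mul x g) (inv x)) n = mul (mul x (pow g n)) (inv x).
Proof.
  induction n; simpl. rewrite idr, invr; reflexivity.
  rewrite IHn. rewrite <- !assoc, canc1. reflexivity.
Qed.
Lemma pow_act g n u : mul (pow g n) (mul g u) = mul (pow g (S n)) u.
Proof. rewrite pow_succ_r, assoc; reflexivity. Qed.
Lemma pow_S_act g n u : mul (pow g (S n)) u = mul g (mul (pow g n) u).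
Proof. simpl. rewrite assoc; reflexivity. Qed.


Local Notation crossing := (crossing G mul e lt).

Definition crossing1 (F Gg u v w : G) : Prop :=
  lt u w /\ lt w v /\ (forall n, lt (mul (pow Gg n) u) v) /\
  (forall n, lt u (mul (pow F n) v)) /\ lt (mul F v) w /\ lt w (mul Gg u).

Lemma pow1 g : pow g 1 = g. Proof. simpl; apply idr. Qed.

Lemma cr_to1 f g u v w : crossing f g u v w -> exists F Gg, crossing1 F Gg u v w.
Proof.
  intros [H1 [H2 [H3 [H4 [M [N [H5 H6]]]]]]].
  exists (pow f N), (pow g M). repeat split; auto.
  - intro n. rewrite pow_mul. apply H3.
  - intro n. rewrite pow_mul. apply H4.
Qed.

Lemma cr1_to f g u v w : crossing1 f g u v w -> crossing f g u v w.
Proof.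
  intros [H1 [H2 [H3 [H4 [H5 H6]]]]]. repeat split; auto.
  exists 1, 1. rewrite !pow1. auto.
Qed.

Lemma cr1_translate x F Gg u v w : crossing1 F Gg u v w ->
  crossing1 (mul (mul x F) (inv x)) (mul (mul x Gg) (inv x)) (mul x u) (mul x v) (mul x w).
Proof.
  intros [H1 [H2 [H3 [H4 [H5 H6]]]]].
  assert (E : forall g n y, mul (pow (mul (mul x g) (inv x)) n) (mul x y) = mul x (mul (pow g n) y)).
  { intros g n y. rewrite pow_conj, <- !assoc, canc1. reflexivity. }
  assert (E1 : forall g y, mul (mul (mul x g) (inv x)) (mul x y) = mul x (mul g y)).
  { intros g y. rewrite <- !assoc, canc1. reflexivity. }
  repeat split; try apply lmul; auto.
  - intro n. rewrite E. apply lmul; auto.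
  - intro n. rewrite E. apply lmul; auto.
  - rewrite E1. apply lmul; auto.
  - rewrite E1. apply lmul; auto.
Qed.

Section Cr.
Variables (F Gg u v w : G).
Hypothesis C : crossing1 F Gg u v w.

Lemma c_uw : lt u w. Proof. apply C. Qed.
Lemma c_wv : lt w v. Proof. apply C. Qed.
Lemma c_G : forall n, lt (mul (pow Gg n) u) v. Proof. apply C. Qed.
Lemma c_F : forall n, lt u (mul (pow F n) v). Proof. apply C. Qed.
Lemma c_Fv : lt (mul F v) w. Proof. apply C. Qed.
Lemma c_Gu : lt w (mul Gg u). Proof. apply C. Qed.

Lemma c_step k : lt (mul (pow F (S k)) v) (mul (pow F k) v).
Proof.
  rewrite <- pow_act. apply lmul. eapply lt_trans; [apply c_Fv | apply c_wv].
Qed.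
Lemma c_decr k : le (mul (pow F (S k)) v) (mul F v).
Proof.
  induction k. rewrite pow1; apply le_refl.
  eapply le_trans; [left; apply c_step | exact IHk].
Qed.
Lemma c_FF : lt u (mul F (mul F v)).
Proof. pose proof (c_F 2) as H. simpl in H. rewrite idr, <- assoc in H. exact H. Qed.
Lemma c_GG : lt (mul Gg (mul Gg u)) v.
Proof. pose proof (c_G 2) as H. simpl in H. rewrite idr, <- assoc in H. exact H. Qed.
Lemma c_Fv_pos : lt u (mul F v).
Proof. pose proof (c_F 1) as H. rewrite pow1 in H. exact H. Qed.

Lemma c_window k : crossing F Gg u v (mul (pow F (S k)) v).
Proof.
  repeat split.
  - apply c_F.
  - induction k.
    rewrite pow1; eapply lt_trans; [apply c_Fv| apply c_wv].
    eapply lt_trans; [apply c_step| exact IHk].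
  - apply c_G.
  - apply c_F.
  - exists 1, (S (S k)). split. apply c_step.
    rewrite pow1. eapply le_lt_trans; [apply c_decr|].
    eapply lt_trans; [apply c_Fv| apply c_Gu].
Qed.

Lemma c_raise z : le u z -> (forall k, lt z (mul (pow F k) v)) -> crossing1 F Gg z v w.
Proof.
  intros Hz Hk.
  assert (Hzw : lt z w).
  { eapply lt_trans; [| apply c_Fv]. specialize (Hk 1). rewrite pow1 in Hk. exact Hk. }
  repeat split; auto.
  - apply c_wv.
  - intro n. eapply lt_trans; [apply lmul; eapply lt_trans; [exact Hzw| apply c_Gu]|].
    rewrite pow_act. apply c_G.
  - apply c_Fv.
  - eapply lt_le_trans; [apply c_Gu| apply le_lmul; exact Hz].
Qed.


End Cr.

Local Notation SP := (S_plus G mul e lt).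
Local Notation SM := (S_minus G mul e lt).
Local Notation SS := (S_set G mul e lt).

Lemma SP_cr1 h F Gg u v w : SP h -> crossing1 F Gg u v w -> le e u -> le h w.
Proof. intros [_ H] C Hu. eapply H; eauto. apply cr1_to; exact C. Qed.
Lemma SM_cr1 h F Gg u v w : SM h -> crossing1 F Gg u v w -> le v e -> le w h.
Proof. intros [_ H] C Hu. eapply H; eauto. apply cr1_to; exact C. Qed.

Lemma V_lemma h F Gg u v w : SP h -> crossing1 F Gg u v w -> le e w -> lt h v.
Proof.
  intros Hh C Hw.
  pose proof (cr1_translate Gg _ _ _ _ _ C) as C'.
  assert (H1 : le h (mul Gg w)).
  { eapply SP_cr1; [exact Hh| exact C'|]. left. eapply le_lt_trans; [exact Hw| apply (c_Gu _ _ _ _ _ C)]. }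
  eapply le_lt_trans; [exact H1|]. eapply lt_trans; [apply lmul; apply (c_Gu _ _ _ _ _ C)|].
  apply (c_GG _ _ _ _ _ C).
Qed.

Lemma U_lemma h F Gg u v w : SM h -> crossing1 F Gg u v w -> le w e -> lt u h.
Proof.
  intros Hh C Hw.
  pose proof (cr1_translate F _ _ _ _ _ C) as C'.
  assert (H1 : le (mul F w) h).
  { eapply SM_cr1; [exact Hh| exact C'|]. left. eapply lt_le_trans; [apply (c_Fv _ _ _ _ _ C)| exact Hw]. }
  destruct (classic (lt u h)) as [H|H]; auto. apply not_lt_le in H.
  exfalso. apply (lt_not_le _ _ (c_FF _ _ _ _ _ C)).
  eapply le_trans; [| exact H]. eapply le_trans; [| exact H1].
  left. apply lmul. apply (c_Fv _ _ _ _ _ C).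
Qed.

Lemma SP_pos h : SP h -> lt e h. Proof. intros [H _]; exact H. Qed.
Lemma SM_neg h : SM h -> lt h e. Proof. intros [H _]; exact H. Qed.

Lemma SP_down h f2 : SP f2 -> lt e h -> lt h f2 -> SP h.
Proof.
  intros [_ H] H1 H2. split; auto. intros f g u v w C Hu.
  left. eapply lt_le_trans; [exact H2| eapply H; eauto].
Qed.
Lemma SM_up h f1 : SM f1 -> lt f1 h -> lt h e -> SM h.
Proof.
  intros [_ H] H1 H2. split; auto. intros f g u v w C Hu.
  left. eapply le_lt_trans; [eapply H; eauto| exact H1].
Qed.

Lemma S_convex : is_convex G lt SS.
Proof.
  intros f1 h f2 H1 H2 L1 L2.
  destruct (total e h) as [P|[P|P]].
  - right; left. destruct H2 as [H2|[H2|H2]].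
    + subst. exfalso. apply (lt_irr e). eauto using lt_trans.
    + eapply SP_down; eauto.
    + exfalso. apply (lt_irr e). apply SM_neg in H2. eauto using lt_trans.
  - left; auto.
  - right; right. destruct H1 as [H1|[H1|H1]].
    + subst. exfalso. apply (lt_irr e). eauto using lt_trans.
    + exfalso. apply (lt_irr e). apply SP_pos in H1. eauto using lt_trans.
    + eapply SM_up; eauto.
Qed.

Lemma inv_neg h : lt e h -> lt (inv h) e.
Proof. intro H. apply (lmul _ _ (inv h)) in H. rewrite idr, invl in H. exact H. Qed.
Lemma inv_pos h : lt h e -> lt e (inv h).
Proof. intro H. apply (lmul _ _ (inv h)) in H. rewrite idr, invl in H. exact H. Qed.

Lemma inv_SP h : SP h -> SM (inv h).
Proof.
  intro Hh. split. apply inv_neg, SP_pos; auto.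
  intros f g u v w C Hv.
  destruct (classic (lt (inv h) w)) as [H|H]; [| apply not_lt_le; exact H].
  exfalso. destruct (cr_to1 _ _ _ _ _ C) as [F [Gg C1]].
  pose proof (cr1_translate h _ _ _ _ _ C1) as C2.
  assert (Hw : le e (mul h w)). { left. rewrite <- (invr h). apply lmul; exact H. }
  pose proof (V_lemma _ _ _ _ _ _ Hh C2 Hw) as L.
  apply (lt_not_le _ _ L). rewrite <- (idr h) at 2. apply le_lmul; exact Hv.
Qed.

Lemma inv_SM h : SM h -> SP (inv h).
Proof.
  intro Hh. split. apply inv_pos, SM_neg; auto.
  intros f g u v w C Hu.
  destruct (classic (lt w (inv h))) as [H|H]; [| apply not_lt_le; exact H].
  exfalso. destruct (cr_to1 _ _ _ _ _ C) as [F [Gg C1]].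
  pose proof (cr1_translate h _ _ _ _ _ C1) as C2.
  assert (Hw : le (mul h w) e). { left. rewrite <- (invr h). apply lmul; exact H. }
  pose proof (U_lemma _ _ _ _ _ _ Hh C2 Hw) as L.
  apply (lt_not_le _ _ L). rewrite <- (idr h) at 1. apply le_lmul; exact Hu.
Qed.

Lemma mul_SP a b : SP a -> SP b -> SP (mul a b).
Proof.
  intros Ha Hb. split. apply pos_mul; apply SP_pos; auto.
  intros f g u v w C Hu.
  destruct (classic (lt w (mul a b))) as [H|H]; [| apply not_lt_le; exact H].
  exfalso. destruct (cr_to1 _ _ _ _ _ C) as [F [Gg C1]].
  assert (Key : forall z, crossing1 F Gg z v w -> le a z -> False).
  { intros z Cz Hz.
    pose proof (cr1_translate (inv a) _ _ _ _ _ Cz) as C2.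
    assert (H2 : le b (mul (inv a) w)).
    { eapply SP_cr1; [exact Hb| exact C2|]. rewrite <- (invl a). apply le_lmul; exact Hz. }
    apply (le_not_lt _ _ H2). apply (lmul _ _ (inv a)) in H. rewrite canc1 in H. exact H. }
  destruct (classic (lt u a)) as [Lu|Lu].
  - apply (Key a); [| apply le_refl]. apply (c_raise _ _ _ _ _ C1); [left; exact Lu|].
    intro k. eapply le_lt_trans; [| apply (c_step _ _ _ _ _ C1 k)].
    apply (proj2 Ha _ _ _ _ _ (c_window _ _ _ _ _ C1 k) Hu).
  - apply (Key u C1). apply not_lt_le; exact Lu.
Qed.


Lemma inv_e : inv e = e.
Proof. symmetry; apply inv_unique; apply idr. Qed.

Lemma SS_e : SS e. Proof. left; reflexivity. Qed.

Lemma S_inv h : SS h -> SS (inv h).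
Proof.
  intros [H|[H|H]].
  - subst; rewrite inv_e; apply SS_e.
  - right; right; apply inv_SP; auto.
  - right; left; apply inv_SM; auto.
Qed.

Lemma S_inv' h : SS (inv h) -> SS h.
Proof. intro H. rewrite <- (inv_inv h). apply S_inv; auto. Qed.

Lemma S_mul a b : SS a -> SS b -> SS (mul a b).
Proof.
  intros Ha Hb.
  destruct Ha as [Ha|Ha]; [subst; rewrite idl; auto|].
  destruct Hb as [Hb|Hb]; [subst; rewrite idr; right; auto|].
  destruct Ha as [Ha|Ha]; destruct Hb as [Hb|Hb].
  - right; left; apply mul_SP; auto.
  - assert (L : lt (mul a b) a). { rewrite <- (idr a) at 2. apply lmul; apply SM_neg; auto. }
    destruct (total e (mul a b)) as [P|[P|P]].
    + apply (S_convex e _ a); auto. apply SS_e. right; left; auto.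
    + rewrite <- P; apply SS_e.
    + apply S_inv'. rewrite inv_mul.
      apply (S_convex e _ (inv b)); [apply SS_e| right; left; apply inv_SM; auto| |].
      * rewrite <- inv_mul. apply inv_pos; auto.
      * rewrite <- (idr (inv b)) at 2. apply lmul. apply inv_neg, SP_pos; auto.
  - assert (L : lt a (mul a b)). { rewrite <- (idr a) at 1. apply lmul; apply SP_pos; auto. }
    destruct (total e (mul a b)) as [P|[P|P]].
    + apply S_inv'. rewrite inv_mul.
      apply (S_convex (inv b) _ e); [right; right; apply inv_SP; auto| apply SS_e| |].
      * rewrite <- (idr (inv b)) at 1. apply lmul. apply inv_pos, SM_neg; auto.
      * rewrite <- inv_mul. apply inv_neg; auto.
    + rewrite <- P; apply SS_e.
    + apply (S_convex a _ e); auto. right; right; auto. apply SS_e.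
  - apply S_inv'. rewrite inv_mul. right; left. apply mul_SP; apply inv_SM; auto.
Qed.

Lemma pow_pos g n : lt e g -> le e (pow g n).
Proof.
  intro H. induction n; simpl. apply le_refl.
  left. eapply lt_le_trans; [exact H|]. rewrite <- (idr g) at 1. apply le_lmul; auto.
Qed.

Lemma pow_incr g n : lt e g -> lt (pow g n) (pow g (S n)).
Proof. intro H. rewrite pow_succ_r. rewrite <- (idr (pow g n)) at 1. apply lmul; auto. Qed.

Lemma S_conradian : conradian_on G mul e lt SS.
Proof.
  intros f g Hf Hg Pf Pg.
  assert (Sg : SP g).
  { destruct Hg as [H|[H|H]]; auto; exfalso; [subst; apply (lt_irr e); auto|].
    apply SM_neg in H. apply (lt_irr e). eauto using lt_trans. }
  destruct (classic (exists n, lt g (mul f (pow g n)))) as [H|H]; auto.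
  exfalso.
  assert (P1 : forall n, le (mul f (pow g n)) g).
  { intro n. apply not_lt_le. intro H'. apply H; eauto. }
  set (V := pow g 3).
  assert (VP : lt e V). { eapply le_lt_trans; [apply (pow_pos g 2 Pg)| apply pow_incr; auto]. }
  assert (gV : lt g V).
  { unfold V. eapply lt_trans; [| apply pow_incr; auto]. rewrite <- (pow1 g) at 1. apply pow_incr; auto. }
  assert (fV : lt (mul f V) V). { eapply le_lt_trans; [apply P1| exact gV]. }
  set (W := mul f (mul f V)).
  assert (WfV : lt W (mul f V)). { apply lmul; exact fV. }
  assert (Wg : lt W g). { eapply lt_le_trans; [exact WfV| apply P1]. }
  assert (INV : forall x, le e x -> le x (pow g 2) ->
      le e (mul g (mul f x)) /\ le (mul g (mul f x)) (pow g 2)).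
  { intros x H1 H2. split.
    - left. apply pos_mul; auto. eapply lt_le_trans; [exact Pf|]. rewrite <- (idr f) at 1.
      apply le_lmul; auto.
    - replace (pow g 2) with (mul g g) by (simpl; rewrite idr; reflexivity).
      apply le_lmul. eapply le_trans; [apply le_lmul; exact H2| apply P1]. }
  assert (Orb : forall n, le e (pow (mul g f) n) /\ le (pow (mul g f) n) (pow g 2)).
  { induction n. split; [apply le_refl| apply pow_pos; auto].
    destruct IHn as [A B]. simpl. rewrite <- assoc. apply INV; auto. }
  assert (C : crossing f (mul g f) e V W).
  { repeat split.
    - apply pos_mul; auto. apply pos_mul; auto.
    - eapply lt_trans; [exact WfV| exact fV].
    - intro n. rewrite idr. eapply le_lt_trans; [apply (Orb n)| apply pow_incr; auto].
    - intro n. destruct n. simpl; rewrite idl; auto.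
      apply pos_mul; auto. simpl. eapply lt_le_trans; [exact Pf|].
      rewrite <- (idr f) at 1. apply le_lmul, pow_pos; auto.
    - exists 1, 3. split.
      + simpl. rewrite idr, <- !assoc. apply lmul, lmul. exact fV.
      + rewrite pow1, idr. eapply lt_trans; [exact Wg|]. rewrite <- (idr g) at 1. apply lmul; auto. }
  apply (le_not_lt _ _ (proj2 Sg _ _ _ _ _ C (le_refl e))). exact Wg.
Qed.


Section DD.
Variable D : G -> Prop.
Hypothesis Dsub : is_subgroup G mul e inv D.
Hypothesis Dconv : is_convex G lt D.

Lemma D_e : D e. Proof. apply Dsub. Qed.
Lemma D_mul a b : D a -> D b -> D (mul a b). Proof. apply Dsub. Qed.
Lemma D_inv a : D a -> D (inv a). Proof. apply Dsub. Qed.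

Lemma below_all x : ~ D x -> lt x e -> forall d, D d -> lt x d.
Proof.
  intros Nx Lx d Hd. destruct (total x d) as [P|[P|P]]; auto; exfalso.
  subst; auto. apply Nx. apply (Dconv d x e); auto. apply D_e.
Qed.
Lemma above_all x : ~ D x -> lt e x -> forall d, D d -> lt d x.
Proof.
  intros Nx Lx d Hd. destruct (total x d) as [P|[P|P]]; auto; exfalso.
  apply Nx. apply (Dconv e x d); auto. apply D_e. subst; auto.
Qed.

Lemma v_in F Gg u v w : crossing1 F Gg u v w -> D u -> D w -> D v.
Proof.
  intros C Du Dw. destruct (classic (D v)) as [Dv|Nv]; auto. exfalso.
  set (d := mul F v).
  assert (Dd : D d). { apply (Dconv u d w); auto. apply (c_Fv_pos _ _ _ _ _ C). apply (c_Fv _ _ _ _ _ C). }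
  set (y := mul (inv v) d).
  assert (Ly : lt y e).
  { unfold y. rewrite <- (invl v). apply lmul. eapply lt_trans; [apply (c_Fv _ _ _ _ _ C)| apply (c_wv _ _ _ _ _ C)]. }
  assert (Ny : ~ D y).
  { intro Dy. apply Nv. replace v with (mul d (inv y)). apply D_mul; auto. apply D_inv; auto.
    unfold y. rewrite inv_mul, inv_inv, canc2. reflexivity. }
  pose proof (below_all y Ny Ly (mul (inv d) u) (D_mul _ _ (D_inv _ Dd) Du)) as L.
  apply (lmul _ _ d) in L. rewrite canc2 in L.
  apply (lt_irr u). eapply lt_trans; [apply (c_FF _ _ _ _ _ C)|].
  replace (mul F (mul F v)) with (mul d y); auto.
  unfold y, d. rewrite <- !assoc. f_equal. rewrite canc2. reflexivity.
Qed.

Lemma u_in F Gg u v w : crossing1 F Gg u v w -> D w -> D v -> D u.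
Proof.
  intros C Dw Dv. destruct (classic (D u)) as [Du|Nu]; auto. exfalso.
  set (d := mul Gg u).
  assert (Dd : D d). { apply (Dconv w d v); auto. apply (c_Gu _ _ _ _ _ C).
    pose proof (c_G _ _ _ _ _ C 1) as H. rewrite pow1 in H. exact H. }
  set (y := mul (inv u) d).
  assert (Ly : lt e y).
  { unfold y. rewrite <- (invl u). apply lmul. eapply lt_trans; [apply (c_uw _ _ _ _ _ C)| apply (c_Gu _ _ _ _ _ C)]. }
  assert (Ny : ~ D y).
  { intro Dy. apply Nu. replace u with (mul d (inv y)). apply D_mul; auto. apply D_inv; auto.
    unfold y. rewrite inv_mul, inv_inv, canc2. reflexivity. }
  pose proof (above_all y Ny Ly (mul (inv d) v) (D_mul _ _ (D_inv _ Dd) Dv)) as L.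
  apply (lmul _ _ d) in L. rewrite canc2 in L.
  apply (lt_irr v). eapply lt_trans; [exact L|].
  replace (mul d y) with (mul Gg (mul Gg u)); [apply (c_GG _ _ _ _ _ C)|].
  unfold y, d. rewrite <- !assoc. f_equal. rewrite canc2. reflexivity.
Qed.

Lemma no_cross F Gg u v w : conradian_on G mul e lt D -> crossing1 F Gg u v w ->
  D F -> D Gg -> D v -> False.
Proof.
  intros Hc C DF DG Dv.
  set (p := mul F v).
  assert (Dp : D p) by (apply D_mul; auto).
  set (a := mul (inv p) (mul (mul Gg F) p)).
  set (b := mul (inv p) (mul Gg p)).
  assert (Bp : lt p (mul Gg p)).
  { eapply lt_trans; [apply (c_Fv _ _ _ _ _ C)|]. eapply lt_trans; [apply (c_Gu _ _ _ _ _ C)|].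
    apply lmul. apply (c_Fv_pos _ _ _ _ _ C). }
  assert (Ap : lt p (mul (mul Gg F) p)).
  { eapply lt_trans; [apply (c_Fv _ _ _ _ _ C)|]. eapply lt_trans; [apply (c_Gu _ _ _ _ _ C)|].
    unfold p. rewrite <- assoc. apply lmul. apply (c_FF _ _ _ _ _ C). }
  destruct (Hc a b) as [n Hn].
  - unfold a. repeat apply D_mul; auto. apply D_inv; auto.
  - unfold b. repeat apply D_mul; auto. apply D_inv; auto.
  - apply lt_shift; auto.
  - apply lt_shift; auto.
  - assert (Eb : pow b n = mul (inv p) (mul (pow Gg n) p)).
    { unfold b. rewrite <- (inv_inv p) at 2. replace (mul (inv p) (mul Gg (inv (inv p))))
        with (mul (mul (inv p) Gg) (inv (inv p))) by (rewrite assoc; reflexivity).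
      rewrite pow_conj, inv_inv, <- !assoc. reflexivity. }
    rewrite Eb in Hn. unfold a, b in Hn.
    rewrite <- !assoc, canc2 in Hn. apply (lmul _ _ p) in Hn. rewrite !canc2 in Hn.
    assert (L2 : lt (mul (pow Gg n) p) v).
    { eapply lt_trans; [apply lmul; eapply lt_trans; [apply (c_Fv _ _ _ _ _ C)| apply (c_Gu _ _ _ _ _ C)]|].
      rewrite pow_act. apply (c_G _ _ _ _ _ C). }
    apply (lmul _ _ (mul Gg F)) in L2.
    apply (lt_irr (mul Gg p)). eapply lt_trans; [exact Hn|].
    unfold p in *. rewrite <- !assoc in L2. exact L2.
Qed.

End DD.

Lemma D_sub_S D : convex_conradian G mul e inv lt D -> forall h, D h -> SS h.
Proof.
  intros [Ds [Dc Dk]] h Dh.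
  destruct (total e h) as [P|[P|P]].
  - right; left. split; auto. intros f g u v w C Hu.
    destruct (classic (lt w h)) as [L|L]; [| apply not_lt_le; exact L]. exfalso.
    destruct (cr_to1 _ _ _ _ _ C) as [F [Gg C1]].
    assert (Du : D u).
    { destruct Hu as [Hu|Hu]; [| subst; apply (D_e D Ds)].
      apply (Dc e u h); auto. apply (D_e D Ds). eapply lt_trans; [apply (c_uw _ _ _ _ _ C1)| exact L]. }
    assert (Dw : D w).
    { apply (Dc e w h); auto. apply (D_e D Ds). eapply le_lt_trans; [exact Hu| apply (c_uw _ _ _ _ _ C1)]. }
    assert (Dv : D v) by (eapply v_in; eauto).
    assert (DFv : D (mul F v)). { apply (Dc u _ w); auto. apply (c_Fv_pos _ _ _ _ _ C1). apply (c_Fv _ _ _ _ _ C1). }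
    assert (DGu : D (mul Gg u)). { apply (Dc w _ v); auto. apply (c_Gu _ _ _ _ _ C1).
      pose proof (c_G _ _ _ _ _ C1 1) as H. rewrite pow1 in H. exact H. }
    apply (no_cross D Ds F Gg u v w Dk C1).
    + replace F with (mul (mul F v) (inv v)) by (rewrite <- assoc, invr, idr; reflexivity).
      apply (D_mul D Ds); auto. apply (D_inv D Ds); auto.
    + replace Gg with (mul (mul Gg u) (inv u)) by (rewrite <- assoc, invr, idr; reflexivity).
      apply (D_mul D Ds); auto. apply (D_inv D Ds); auto.
    + exact Dv.
  - left; auto.
  - right; right. split; auto. intros f g u v w C Hv.
    destruct (classic (lt h w)) as [L|L]; [| apply not_lt_le; exact L]. exfalso.
    destruct (cr_to1 _ _ _ _ _ C) as [F [Gg C1]].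
    assert (Dv : D v).
    { destruct Hv as [Hv|Hv]; [| subst; apply (D_e D Ds)].
      apply (Dc h v e); auto. apply (D_e D Ds). eapply lt_trans; [exact L| apply (c_wv _ _ _ _ _ C1)]. }
    assert (Dw : D w).
    { apply (Dc h w e); auto. apply (D_e D Ds). eapply lt_le_trans; [apply (c_wv _ _ _ _ _ C1)| exact Hv]. }
    assert (Du : D u) by (eapply u_in; eauto).
    assert (DFv : D (mul F v)). { apply (Dc u _ w); auto. apply (c_Fv_pos _ _ _ _ _ C1). apply (c_Fv _ _ _ _ _ C1). }
    assert (DGu : D (mul Gg u)). { apply (Dc w _ v); auto. apply (c_Gu _ _ _ _ _ C1).
      pose proof (c_G _ _ _ _ _ C1 1) as H. rewrite pow1 in H. exact H. }
    apply (no_cross D Ds F Gg u v w Dk C1).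
    + replace F with (mul (mul F v) (inv v)) by (rewrite <- assoc, invr, idr; reflexivity).
      apply (D_mul D Ds); auto. apply (D_inv D Ds); auto.
    + replace Gg with (mul (mul Gg u) (inv u)) by (rewrite <- assoc, invr, idr; reflexivity).
      apply (D_mul D Ds); auto. apply (D_inv D Ds); auto.
    + exact Dv.
Qed.

Lemma S_cc : convex_conradian G mul e inv lt SS.
Proof.
  split; [| split; [apply S_convex| apply S_conradian]].
  split; [apply SS_e| split; [apply S_mul| apply S_inv]].
Qed.

End P.

Theorem mainTheorem7 (G : Type) (mul : G -> G -> G) (e : G) (inv : G -> G)
    (lt : G -> G -> Prop)
    (HG : is_group G mul e inv) (Hord : is_left_ordering G mul lt) :
  is_conradian_soul G mul e inv lt (S_set G mul e lt) /\
  (forall C : G -> Prop, is_conradian_soul G mul e inv lt C ->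
     forall h, C h <-> S_set G mul e lt h).
Proof.
  split.
  - split. apply (S_cc G mul e inv lt HG Hord).
    intros D HD _ x Dx. apply (D_sub_S G mul e inv lt HG Hord D HD x Dx).
  - intros C [HC Hmax] h. split.
    + intro Ch. apply (D_sub_S G mul e inv lt HG Hord C HC h Ch).
    + intro Sh. apply (Hmax _ (S_cc G mul e inv lt HG Hord)); auto.
      intros x Cx. apply (D_sub_S G mul e inv lt HG Hord C HC x Cx).
Qed.
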